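(* Let $a,b,h\in\mathbb{R}$ with $h>0$ and $\frac{b-a}{h}\in\mathbb{N}\setminus\{1\}$. Suppose $w:[a,b]_h\to\mathbb{R}$ satisfies $$-D_h^+D_h^-w(x)\le\lambda_{0,h}w(x)\ \ (x\in(a,b)_h),\qquad w(a)\le0,\ w(b)\le0,$$ for some $\lambda_{0,h}<\lambda_{1,h}:=\frac{4}{h^2}\sin^2\big(\frac{\pi h}{2(b-a)}\big)$. Then $w(x)\le0$ for all $x\in[a,b]_h$.
   Context: $[a,b]_h=[a,b]\cap(a+h\mathbb{Z})$ and $(a,b)_h=(a,b)\cap(a+h\mathbb{Z})$ (the grid points). $D_h^+w(x)=\frac{w(x+h)-w(x)}{h}$, $D_h^-w(x)=\frac{w(x)-w(x-h)}{h}$, so $D_h^+D_h^-w(x)=\frac{w(x+h)-2w(x)+w(x-h)}{h^2}$. *)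

(* Defs.v *)
From Stdlib Require Import Reals ZArith.
Open Scope R_scope.

Definition grid_closed (a b h x : R) : Prop :=
  a <= x <= b /\ exists k : Z, x = a + IZR k * h.

Definition grid_open (a b h x : R) : Prop :=
  a < x < b /\ exists k : Z, x = a + IZR k * h.

Definition Dplus (h : R) (w : R -> R) (x : R) : R := (w (x + h) - w x) / h.
Definition Dminus (h : R) (w : R -> R) (x : R) : R := (w x - w (x - h)) / h.

Definition D2 (h : R) (w : R -> R) (x : R) : R := Dplus h (Dminus h w) x.

Definition lambda1 (a b h : R) : R :=
  4 / h ^ 2 * (sin (PI * h / (2 * (b - a)))) ^ 2.

(* Main.v *)
From Pilot Require Import Defs.
From Stdlib Require Import Reals ZArith Lra Lia Psatz.
Open Scope R_scope.

Lemma argmax (f : nat -> R) n : (1 <= n)%nat ->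
  exists m, (1 <= m <= n)%nat /\ forall k, (1 <= k <= n)%nat -> f k <= f m.
Proof.
  induction n; intro H. lia.
  destruct (Nat.eq_dec n 0).
  - subst; exists 1%nat; split; [lia|]; intros k Hk; replace k with 1%nat by lia; lra.
  - destruct IHn as [m [Hm Hmax]]; [lia|]. destruct (Rle_dec (f (S n)) (f m)).
    + exists m; split; [lia|]. intros k Hk. destruct (Nat.eq_dec k (S n)); [subst; auto| apply Hmax; lia].
    + exists (S n). split; [lia|]. intros k Hk. destruct (Nat.eq_dec k (S n)); [subst; lra|].
      specialize (Hmax k ltac:(lia)); lra.
Qed.

Section Phi.
Variable N : nat.
Hypothesis HN : (2 <= N)%nat.
Definition phi k := sin (PI * INR k / INR N).

Lemma INR_N_pos : 0 < INR N.
Proof. apply lt_0_INR; lia. Qed.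

Lemma phi_pos k : (0 < k < N)%nat -> 0 < phi k.
Proof.
  intro Hk. pose proof INR_N_pos. pose proof PI_RGT_0.
  assert (0 < INR k) by (apply lt_0_INR; lia).
  assert (INR k < INR N) by (apply lt_INR; lia).
  unfold phi. set (y := PI * INR k / INR N).
  assert (y * INR N = PI * INR k) by (unfold y; field; lra).
  apply sin_gt_0; nra.
Qed.

Lemma phi_0 : phi 0 = 0.
Proof. unfold phi. simpl. replace (PI * 0 / INR N) with 0 by (pose proof INR_N_pos; field; lra). apply sin_0. Qed.

Lemma phi_N : phi N = 0.
Proof. unfold phi. replace (PI * INR N / INR N) with PI by (pose proof INR_N_pos; field; lra). apply sin_PI. Qed.

Lemma phi_rec p : phi (S (S p)) + phi p = 2 * cos (PI / INR N) * phi (S p).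
Proof.
  pose proof INR_N_pos. unfold phi.
  set (A := PI * INR (S p) / INR N). set (B := PI / INR N).
  replace (PI * INR (S (S p)) / INR N) with (A + B) by (unfold A, B; rewrite (S_INR (S p)); field; lra).
  replace (PI * INR p / INR N) with (A - B) by (unfold A, B; rewrite (S_INR p); field; lra).
  rewrite sin_plus, sin_minus. ring.
Qed.

Lemma lambda1_eq a b h : 0 < h -> b - a = INR N * h ->
  lambda1 a b h * h ^ 2 = 2 - 2 * cos (PI / INR N).
Proof.
  intros Hh Hba. pose proof INR_N_pos. unfold lambda1. rewrite Hba.
  replace (PI * h / (2 * (INR N * h))) with (PI / INR N / 2) by (field; lra).
  replace (PI / INR N) with (2 * (PI / INR N / 2)) at 2 by (field; lra).
  rewrite cos_2a_sin. field; lra.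
Qed.
End Phi.

Theorem mainTheorem10 (a b h : R) (N : nat) (lam0 : R) (w : R -> R) :
  0 < h ->
  (b - a) / h = INR N ->
  N <> 1%nat ->
  (forall x, grid_open a b h x -> - D2 h w x <= lam0 * w x) ->
  w a <= 0 -> w b <= 0 ->
  lam0 < lambda1 a b h ->
  forall x, grid_closed a b h x -> w x <= 0.
Proof.
  intros Hh HN HN1 Hint Ha Hb Hlam x [[Hax Hxb] [k Hk]].
  assert (Hba : b - a = INR N * h).
  { rewrite <- HN. field. lra. }
  set (u := fun j => w (a + INR j * h)).
  assert (Hk0 : (0 <= k)%Z).
  { apply le_IZR. nra. }
  set (n := Z.to_nat k).
  assert (Hkn : IZR k = INR n).
  { unfold n. rewrite INR_IZR_INZ, Z2Nat.id; auto. }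
  rewrite Hkn in Hk.
  assert (HnN : (n <= N)%nat).
  { apply INR_le. nra. }
  destruct (Nat.eq_dec n 0) as [E|E].
  { subst x. rewrite E. simpl. replace (a + 0 * h) with a by ring. auto. }
  destruct (Nat.eq_dec n N) as [E'|E'].
  { subst x. rewrite E'. replace (a + INR N * h) with b by lra. auto. }
  assert (H2 : (2 <= N)%nat) by lia.
  subst x. fold (u n).
  destruct (Rle_dec (u n) 0) as [|Hpos]; auto. exfalso.
  apply Rnot_le_lt in Hpos.
  destruct (argmax (fun j => u j / phi N j) (N - 1)) as [m [Hm Hmax]]; [lia|].
  set (t := u m / phi N m).
  assert (Hphim : 0 < phi N m) by (apply phi_pos; lia).
  assert (Hphin : 0 < phi N n) by (apply phi_pos; lia).
  assert (Ht : 0 < t).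
  { specialize (Hmax n ltac:(lia)). simpl in Hmax. fold t in Hmax.
    assert (0 < u n / phi N n) by (apply Rdiv_lt_0_compat; auto). lra. }
  assert (Hle : forall j, (j <= N)%nat -> u j <= t * phi N j).
  { intros j Hj. destruct (Nat.eq_dec j 0) as [->|].
    { rewrite (phi_0 N H2). unfold u; simpl. replace (a + 0 * h) with a by ring. lra. }
    destruct (Nat.eq_dec j N) as [->|].
    { rewrite (phi_N N H2). unfold u. replace (a + INR N * h) with b by lra. lra. }
    assert (0 < phi N j) by (apply phi_pos; lia).
    specialize (Hmax j ltac:(lia)). simpl in Hmax. fold t in Hmax.
    apply (Rmult_le_compat_r (phi N j)) in Hmax; [|lra].
    replace (u j / phi N j * phi N j) with (u j) in Hmax by (field; lra). lra. }
  assert (Hum : u m = t * phi N m) by (unfold t; field; lra).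
  destruct m as [|p]; [lia|].
  set (xm := a + INR (S p) * h).
  assert (Hgo : grid_open a b h xm).
  { split.
    - assert (INR (S p) < INR N) by (apply lt_INR; lia).
      assert (0 < INR (S p)) by (apply lt_0_INR; lia).
      unfold xm; nra.
    - exists (Z.of_nat (S p)). rewrite <- INR_IZR_INZ. reflexivity. }
  specialize (Hint xm Hgo).
  unfold D2, Dplus, Pilot.Defs.Dminus in Hint.
  replace (xm + h - h) with xm in Hint by ring.
  replace (xm + h) with (a + INR (S (S p)) * h) in Hint by (unfold xm; rewrite (S_INR (S p)); ring).
  replace (xm - h) with (a + INR p * h) in Hint by (unfold xm; rewrite (S_INR p); ring).
  fold (u (S (S p))) (u p) in Hint. unfold xm in Hint. fold (u (S p)) in Hint.
  assert (Hint2 : 2 * u (S p) - u (S (S p)) - u p <= lam0 * u (S p) * h ^ 2).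
  { replace (2 * u (S p) - u (S (S p)) - u p) with
      ((- (((u (S (S p)) - u (S p)) / h - (u (S p) - u p) / h) / h)) * h ^ 2) by (field; lra).
    apply Rmult_le_compat_r; [nra|]. exact Hint. }
  pose proof (Hle (S (S p)) ltac:(lia)) as H1.
  pose proof (Hle p ltac:(lia)) as H3.
  pose proof (phi_rec N H2 p) as Hrec.
  pose proof (lambda1_eq N H2 a b h Hh Hba) as HL.
  set (c := cos (PI / INR N)) in *.
  assert (Hkey : lambda1 a b h * (h ^ 2 * (t * phi N (S p))) <= lam0 * (h ^ 2 * (t * phi N (S p)))).
  { replace (lambda1 a b h * (h ^ 2 * (t * phi N (S p)))) with ((2 - 2 * c) * (t * phi N (S p)))
      by (rewrite <- HL; ring).
    rewrite Hum in Hint2.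
    assert (t * phi N (S (S p)) + t * phi N p = 2 * c * (t * phi N (S p))) by (rewrite <- Rmult_plus_distr_l, Hrec; ring).
    nra. }
  assert (0 < h ^ 2 * (t * phi N (S p))) by (apply Rmult_lt_0_compat; [nra| apply Rmult_lt_0_compat; auto]).
  apply Rmult_le_reg_r in Hkey; auto. lra.
Qed.
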